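(* Let $G$ be an optimal digraph. Then $\alpha_G$ is finite, and for every vertex $v$ of $G$, $\alpha_G - 1 \leq \delta^+(v) \leq \beta_G$ and $\alpha_G - 1 \leq \delta^-(v) \leq \beta_G$.
   Context: Digraphs are finite, loopless, with at most one edge $uv$ per ordered pair. $\delta^+(v)=|\{u: vu\in E(G)\}|$, $\delta^-(v)=|\{u:uv\in E(G)\}|$. A digraph is $2$-free if no distinct $u,v$ have both $uv,vu$ as edges. A circular interval digraph is a digraph together with a fixed arrangement of its vertices in a circle such that for all distinct $u,v,w$ in clockwise order with $uw\in E(G)$, also $uv,vw\in E(G)$. For distinct $u,v$, $d(u,v) = 1 + |\{w: u,w,v \text{ distinct, in clockwise order}\}|$; this is the length of the ordered pair $uv$. A non-edge is an ordered pair $(u,v)$ of distinct vertices with neither $uv$ nor $vu$ an edge; its length is $d(u,v)$. $\alpha_G$ is the minimum length of a non-edge ($\infty$ if none) and $\beta_G$ the maximum length of an edge ($0$ if none). $\xi(G)$ is the number of pairs $(uv,(w,x))$ with $uv\in E(G)$, $(w,x)$ a non-edge, $d(u,v)>d(w,x)$. $\tilde P_3(G)$ is the number of triples $(a,b,c)$ of distinct vertices with $ab,bc\in E(G)$ and $ac,ca\notin E(G)$. For fixed $n\ge 4$, $G$ is optimal if it is a $2$-free circular interval digraph on $n$ vertices maximizing $\tilde P_3$ among all such digraphs and, subject to this, minimizing $\xi(G)$. *)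

(* Defs.v *)
(* Vertices of a digraph on n vertices are 'I_n, arranged
   on the circle in the clockwise order 0, 1, ..., n-1. *)
From mathcomp Require Import all_boot all_order.
Set Implicit Arguments. Unset Strict Implicit. Unset Printing Implicit Defensive.

Section Digraphs.
Variable n : nat.
Implicit Types (e : rel 'I_n) (u v w : 'I_n).

(* length d(u,v) of the ordered pair uv: 1 + #vertices strictly between u
   and v clockwise, i.e. (v - u) mod n *)
Definition dist u v : nat := (v + n - u) %% n.

Definition cw u v w : bool :=
  [&& u != v, v != w, u != w & dist u v < dist u w].

Definition loopless e : Prop := forall v, ~~ e v v.

Definition two_free e : Prop := forall u v, u != v -> ~~ (e u v && e v u).

Definition circ_interval e : Prop :=
  forall u v w, cw u v w -> e u w -> e u v && e v w.

(* 2-free circular interval digraph (with the fixed circular arrangement) *)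
Definition valid e : Prop := [/\ loopless e, two_free e & circ_interval e].

Definition nonedge e u v : bool := [&& u != v, ~~ e u v & ~~ e v u].

Definition outdeg e v : nat := #|[set u | e v u]|.
Definition indeg e v : nat := #|[set u | e u v]|.

(* alpha_G is finite iff some non-edge exists *)
Definition alpha_finite e : bool := [exists p : 'I_n * 'I_n, nonedge e p.1 p.2].

(* minimum length of a non-edge (meaningful when alpha_finite e; all
   lengths are < n, so the default n plays no role in that case) *)
Definition alpha e : nat :=
  \big[minn/n]_(p : 'I_n * 'I_n | nonedge e p.1 p.2) dist p.1 p.2.

(* maximum length of an edge (0 if no edges) *)
Definition beta e : nat :=
  \max_(p : 'I_n * 'I_n | e p.1 p.2) dist p.1 p.2.

Definition xi e : nat :=
  #|[set q : ('I_n * 'I_n) * ('I_n * 'I_n) |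
      [&& e q.1.1 q.1.2, nonedge e q.2.1 q.2.2 &
          dist q.2.1 q.2.2 < dist q.1.1 q.1.2]]|.

Definition P3 e : nat :=
  #|[set t : 'I_n * 'I_n * 'I_n |
      [&& t.1.1 != t.1.2, t.1.2 != t.2, t.1.1 != t.2,
          e t.1.1 t.1.2, e t.1.2 t.2, ~~ e t.1.1 t.2 & ~~ e t.2 t.1.1]]|.

Definition optimal e : Prop :=
  [/\ valid e,
      forall e', valid e' -> P3 e' <= P3 e &
      forall e', valid e' -> P3 e' = P3 e -> xi e <= xi e'].

End Digraphs.

(* Main.v *)
Require Import Defs.
From mathcomp Require Import all_boot all_order zify.
Set Implicit Arguments. Unset Strict Implicit. Unset Printing Implicit Defensive.

Lemma neqo n (x y : 'I_n) : (x != y) = (nat_of_ord x != nat_of_ord y).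
Proof. by rewrite val_eqE. Qed.
Lemma eqo n (x y : 'I_n) : (x == y) = (nat_of_ord x == nat_of_ord y).
Proof. by rewrite val_eqE. Qed.

Lemma distP n (x y : 'I_n) :
  (x <= y /\ dist x y = y - x) \/ (y < x /\ dist x y = y + n - x).
Proof.
have xn := ltn_ord x; have yn := ltn_ord y.
rewrite /dist; case: (leqP x y) => h; [left|right]; split => //.
- have -> : y + n - x = 1 * n + (y - x) by lia.
  rewrite modnMDl modn_small //; lia.
- rewrite modn_small //; lia.
Qed.

Ltac dcase x y := case: (distP x y) => [[? ?]|[? ?]].

Lemma dist_inj n (x y z : 'I_n) : dist x y = dist x z -> y = z.
Proof.
move=> h; apply: val_inj => /=; have := ltn_ord x; have := ltn_ord y; have := ltn_ord z.
dcase x y; dcase x z; lia.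
Qed.

Lemma dist_injl n (x y z : 'I_n) : dist y x = dist z x -> y = z.
Proof.
move=> h; apply: val_inj => /=; have := ltn_ord x; have := ltn_ord y; have := ltn_ord z.
dcase y x; dcase z x; lia.
Qed.

Lemma dist_pos n (x y : 'I_n) : (0 < dist x y) = (x != y).
Proof.
rewrite neqo; have := ltn_ord x; have := ltn_ord y.
dcase x y; lia.
Qed.

Lemma dist_ltn n (x y : 'I_n) : dist x y < n.
Proof. have := ltn_ord x; have := ltn_ord y; dcase x y; lia. Qed.

Lemma dist_add n (x y : 'I_n) : x != y -> dist x y + dist y x = n.
Proof. rewrite neqo; have := ltn_ord x; have := ltn_ord y; dcase x y; dcase y x; lia. Qed.

Lemma cw_add n (a b c : 'I_n) : cw a b c -> dist a b + dist b c = dist a c.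
Proof.
case/and4P; rewrite !neqo => h1 h2 h3 h4.
move: h4; have := ltn_ord a; have := ltn_ord b; have := ltn_ord c.
dcase a b; dcase b c; dcase a c; lia.
Qed.

Lemma cwI n (a b c : 'I_n) : a != b -> b != c -> a != c -> dist a b < dist a c -> cw a b c.
Proof. by move=> *; apply/and4P. Qed.

Definition addo n (x : 'I_n) (k : nat) : 'I_n :=
  Ordinal (ltn_pmod (x + k) (leq_ltn_trans (leq0n x) (ltn_ord x))).

Lemma dist_addo n (x : 'I_n) k : k < n -> dist x (addo x k) = k.
Proof.
move=> kn; have xn := ltn_ord x.
have hv : nat_of_ord (addo x k) = if x + k < n then x + k else x + k - n.
  rewrite /=; case: ifP => h; first by rewrite modn_small.
  have -> : x + k = 1 * n + (x + k - n) by lia.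
  rewrite modnMDl modn_small //; lia.
have := ltn_ord (addo x k); dcase x (addo x k); move: hv; case: ifP; lia.
Qed.
Lemma card_upper (T : finType) (A : {set T}) (f : T -> nat) b :
  {in A &, injective f} -> (forall u, u \in A -> 0 < f u <= b) -> #|A| <= b.
Proof.
move=> inj hb; rewrite cardE -(size_map f) -(size_iota 1 b).
apply: uniq_leq_size; first by rewrite map_inj_in_uniq ?enum_uniq // => u v; rewrite !mem_enum; apply: inj.
move=> k /mapP [u]; rewrite mem_enum => /hb uA ->; rewrite mem_iota; lia.
Qed.

Lemma card_lower (T : finType) (A : {set T}) (f : T -> nat) b :
  (forall k, 0 < k <= b -> exists2 u, u \in A & f u = k) -> b <= #|A|.
Proof.
move=> hb; rewrite cardE -(size_map f) -{1}(size_iota 1 b).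
apply: uniq_leq_size; first exact: iota_uniq.
move=> k; rewrite mem_iota => hk; have [|u uA <-] := hb k; first lia.
by apply/mapP; exists u; rewrite ?mem_enum.
Qed.

Lemma C1 n (e : rel 'I_n) (x z : 'I_n) :
  circ_interval e -> loopless e -> e x z -> dist x z <= outdeg e x.
Proof.
move=> ci lo exz; rewrite /outdeg; apply: (card_lower (f := dist x)) => k hk.
have xz : x != z by apply: contraTneq exz => ->; apply: lo.
have kn : k < n by have := dist_ltn x z; lia.
exists (addo x k); last exact: dist_addo.
rewrite inE; have dk := dist_addo x kn.
case: (ltnP k (dist x z)) => hkd.
- have c : cw x (addo x k) z.
    apply: cwI => //; last by rewrite dk.
    + by rewrite -dist_pos dk; lia.
    + by apply/eqP => h; move: hkd; rewrite -h dk ltnn.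
  by case/andP: (ci _ _ _ c exz).
- have -> : addo x k = z by apply: (@dist_inj _ x); rewrite dk; lia.
  exact: exz.
Qed.

Lemma C3 n (e : rel 'I_n) (x y : 'I_n) :
  circ_interval e -> loopless e -> 0 < dist x y <= outdeg e x -> e x y.
Proof.
move=> ci lo /andP [h1 h2]; apply/negPn/negP => nxy.
have : outdeg e x <= (dist x y).-1.
  rewrite /outdeg; apply: (card_upper (f := dist x)).
    by move=> u v _ _; apply: dist_inj.
  move=> z; rewrite inE => exz.
  have xz : x != z by apply: contraTneq exz => ->; apply: lo.
  rewrite dist_pos xz /=.
  case: (ltnP (dist x z) (dist x y)) => h; first lia.
  have yz : y != z by apply: contraNneq nxy => ->.
  have xy : x != y by rewrite -dist_pos.
  have : dist x y < dist x z by rewrite ltn_neqAle h andbT; apply: contra yz => /eqP/dist_inj ->.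
  move=> lt; have c : cw x y z by apply: cwI.
  by case/andP: (ci _ _ _ c exz) => /(negP nxy).
lia.
Qed.
Ltac clean := repeat match goal with
 | H : ?T |- _ => lazymatch T with
     | is_true (_ <= _) => fail | is_true ((_ <= _) && (_ <= _)) => fail | is_true (_ < _) => fail | @eq nat _ _ => fail
     | _ => clear H end end.
Ltac slia := clean; lia.
Lemma bigmin_le_seq (I : eqType) (r : seq I) (P : pred I) (F : I -> nat) x0 j :
  j \in r -> P j -> \big[minn/x0]_(i <- r | P i) F i <= F j.
Proof.
elim: r => [|a r IH] //=; rewrite big_cons in_cons; case/orP => [/eqP <-|jr] Pj.
  by rewrite Pj geq_minl.
case: ifP => _; last exact: IH.
exact: leq_trans (geq_minr _ _) (IH jr Pj).
Qed.

Lemma alpha_le n (e : rel 'I_n) p q : nonedge e p q -> alpha e <= dist p q.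
Proof. by move=> h; rewrite /alpha; apply: (@bigmin_le_seq _ _ _ _ _ (p, q)) => //; rewrite mem_index_enum. Qed.

Lemma adjA n (e : rel 'I_n) x y : x != y -> dist x y < alpha e -> e x y || e y x.
Proof.
move=> xy h; apply/negPn/negP => hn.
have : nonedge e x y by rewrite /nonedge xy; move: hn; rewrite negb_or.
by move/alpha_le; lia.
Qed.

Definition P3set n (e : rel 'I_n) := [set t : 'I_n * 'I_n * 'I_n |
      [&& t.1.1 != t.1.2, t.1.2 != t.2, t.1.1 != t.2,
          e t.1.1 t.1.2, e t.1.2 t.2, ~~ e t.1.1 t.2 & ~~ e t.2 t.1.1]].

Lemma P3E n (e : rel 'I_n) : P3 e = #|P3set e|.
Proof. by []. Qed.

Lemma key n (e : rel 'I_n) : 4 <= n -> valid e ->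
  (forall e' : rel 'I_n, valid e' -> P3 e' <= P3 e) -> (exists p q, nonedge e p q) ->
  forall v0 : 'I_n,
  ~ (forall x y : 'I_n, x != y -> dist x y <= (outdeg e v0).+1 -> e x y || e y x).
Proof.
move=> n4 [lo tf ci] Pmax [p [q npq]] v0 H0.
case: (arg_minnP (outdeg e) (erefl true : xpredT v0)) => v _ vmin.
have [m Em] : exists m, outdeg e v = m by exists (outdeg e v).
have vmin' : forall u, m <= outdeg e u by move=> u; rewrite -Em; apply: vmin.
clear vmin.
have H : forall x y : 'I_n, x != y -> dist x y <= m.+1 -> e x y || e y x.
  move=> x y xy h; apply: H0 => //; have := vmin' v0; slia.
have pq : p != q by case/and3P: npq.
have big1 : m.+1 < dist p q.
  rewrite ltnNge; apply/negP => h; have := H p q pq h.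
  by case/and3P: npq => _ /negbTE -> /negbTE ->.
have big2 : m.+1 < dist q p.
  rewrite ltnNge; apply/negP => h; have := H q p (negbT (introF eqP (fun E => (negP pq) (introT eqP (esym E))))) h.
  by case/and3P: npq => _ /negbTE -> /negbTE ->.
have nbig : 2 * m + 4 <= n by have := dist_add pq; slia.
have [w dvw] : exists w, dist v w = m.+1 by exists (addo v m.+1); apply: dist_addo; slia.
have vw : v != w by rewrite -dist_pos dvw.
have wv : w != v by rewrite eq_sym.
have dwv : dist w v = n - m.+1 by have := dist_add vw; slia.
have nvw : ~~ e v w.
  by apply/negP => /(C1 ci lo); rewrite dvw Em ltnn.
have ewv : e w v by case/orP: (H v w vw (eq_leq dvw)) => // /(negP nvw).
set e' : rel 'I_n := fun x y => e x y && ~~ ((x == w) && (y == v)).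
have val' : valid e'.
  split.
  - by move=> x; rewrite /e' (negbTE (lo x)).
  - move=> x y xy; apply/negP => /andP [/andP [h1 _] /andP [h2 _]].
    by have := tf x y xy; rewrite h1 h2.
  - move=> x y z c /andP [exz hxz]; have /andP [exy eyz] := ci _ _ _ c exz.
    rewrite /e' exy eyz /=.
    have ca := cw_add c.
    case/and4P: (c) => xy yz xz _.
    apply/andP; split.
    + apply/negP => /andP [/eqP ex /eqP ey]; subst x y.
      have dvz : 0 < dist v z <= m by rewrite dist_pos yz /=; have := dist_ltn w z; slia.
      have cvzw : cw v z w.
        apply: cwI => //; last by rewrite dvw; slia.
        by apply/eqP => E; move: xz; rewrite E eqxx.
      have := cw_add cvzw; rewrite dvw => ca2.
      have ezw : e z w.
        apply: (C3 ci lo); have := vmin' z.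
        have zw : z != w by apply/eqP => E; move: xz; rewrite E eqxx.
        have : 0 < dist z w by rewrite dist_pos.
        slia.
      have zw : z != w by apply/eqP => E; move: xz; rewrite E eqxx.
      by have := tf z w zw; rewrite ezw exz.
    + apply/negP => /andP [/eqP ey /eqP ez]; subst y z.
      have xv : x != v by [].
      have := dist_add xv => da.
      have dvx : 0 < dist v x <= m by rewrite dist_pos eq_sym xv /=; move: ca; rewrite dwv; have := dist_pos x w; rewrite xy; slia.
      have evx : e v x by apply: (C3 ci lo); rewrite Em.
      by have := tf x v xv; rewrite exz evx.
have lt : P3 e < P3 e'.
  rewrite !P3E; apply: proper_card; apply/properP; split.
  - apply/subsetP => [[[a b] c]]; rewrite !inE /=.
    case/and5P => ab bc ac eab /and3P [ebc nac nca].
    rewrite ab bc ac /= /e' eab ebc /=.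
    rewrite (negbTE nac) (negbTE nca) /= !andbT.
    apply/andP; split.
    + apply/negP => /andP [/eqP ea /eqP eb]; subst a b.
      have dvc : 0 < dist v c <= m by rewrite dist_pos bc /= -Em; apply: (C1 ci lo).
      have cvcw : cw v c w by apply: cwI => //; [by rewrite eq_sym | by rewrite dvw; slia].
      have := cw_add cvcw; rewrite dvw => ca2.
      have cw' : c != w by rewrite eq_sym.
      by have := H c w cw' ltac:(slia); rewrite (negbTE nca) (negbTE nac).
    + apply/negP => /andP [/eqP eb /eqP ec]; subst b c.
      case: (ltnP (dist w a) (dist w v)) => hwa.
      * have cwav : cw w a v by apply: cwI => //; by rewrite eq_sym.
        by case/andP: (ci _ _ _ cwav ewv) => _; rewrite (negbTE nac).
      * have av : a != v by [].
        have lt2 : dist w v < dist w a.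
          rewrite ltn_neqAle hwa andbT; apply/negP => /eqP /dist_inj E.
          by move: av; rewrite E eqxx.
        have cwva : cw w v a by apply: cwI => //; by rewrite eq_sym.
        have := cw_add cwva; rewrite dwv => ca2.
        have va : v != a by rewrite eq_sym.
        have := dist_ltn w a.
        move=> hl; have := H v a va ltac:(slia).
        by rewrite (negbTE nca) (negbTE nac).
  - set y0 := addo w 1.
    have dwy : dist w y0 = 1 by apply: dist_addo; slia.
    have wy : w != y0 by rewrite -dist_pos dwy.
    have yv : y0 != v.
      by apply/eqP => E; move: dwy; rewrite E dwv; slia.
    have cwyv : cw w y0 v by apply: cwI => //; rewrite dwy dwv; slia.
    have /andP [ewy eyv] := ci _ _ _ cwyv ewv.
    exists ((w, y0), v); rewrite !inE /=.
    + rewrite wy yv wv /e' ewy eyv ewv /= eqxx (negbTE yv) andbF /=.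
      rewrite (negbTE nvw) /= (negbTE (introN eqP (fun E : y0 = w => (negP wy) (introT eqP (esym E))))).
      by rewrite eqxx.
    + by rewrite ewv /= !andbF.
by have := Pmax e' val'; slia.
Qed.
Definition rv n (x : 'I_n) : 'I_n :=
  Ordinal (ltn_pmod (n - x) (leq_ltn_trans (leq0n x) (ltn_ord x))).

Arguments rv : simpl never.

Lemma rvE n (x : 'I_n) :
  (nat_of_ord x = 0 /\ nat_of_ord (rv x) = 0) \/ (0 < x /\ nat_of_ord (rv x) = n - x).
Proof.
have xn := ltn_ord x; rewrite /=.
case: (posnP x) => h; [left|right]; split => //.
  by rewrite h subn0 modnn.
rewrite modn_small //; lia.
Qed.

Lemma rvK n (x : 'I_n) : rv (rv x) = x.
Proof.
apply: val_inj; change (nat_of_ord (rv (rv x)) = nat_of_ord x); have := ltn_ord x.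
case: (rvE x) => [[h1 h2]|[h1 h2]]; case: (rvE (rv x)) => [[h3 h4]|[h3 h4]]; lia.
Qed.

Lemma rv_inj n : injective (@rv n).
Proof. exact: can_inj (@rvK n). Qed.
Arguments rv_inj {n}.

Lemma rv_neq n (x y : 'I_n) : (rv x != rv y) = (x != y).
Proof. by rewrite (inj_eq rv_inj). Qed.

Lemma dist_rv n (x y : 'I_n) : dist (rv x) (rv y) = dist y x.
Proof.
have := ltn_ord x; have := ltn_ord y; have := ltn_ord (rv x); have := ltn_ord (rv y).
case: (rvE x) => [[h1 h2]|[h1 h2]]; case: (rvE y) => [[h3 h4]|[h3 h4]];
dcase (rv x) (rv y); dcase y x; lia.
Qed.

Definition rev n (e : rel 'I_n) : rel 'I_n := fun x y => e (rv y) (rv x).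

Lemma cw_rv n (x y z : 'I_n) : cw x y z -> cw (rv z) (rv y) (rv x).
Proof.
move=> c; have ca := cw_add c; case/and4P: c => xy yz xz _.
apply: cwI; rewrite ?rv_neq 1?eq_sym //.
rewrite !dist_rv; have : 0 < dist x y by rewrite dist_pos.
move: ca; clear; lia.
Qed.

Lemma valid_rev n (e : rel 'I_n) : valid e -> valid (rev e).
Proof.
case=> lo tf ci; split.
- by move=> x; apply: lo.
- move=> x y xy; rewrite /rev andbC; apply: tf; by rewrite rv_neq.
- move=> x y z c; rewrite /rev => h.
  by have /andP [h1 h2] := ci _ _ _ (cw_rv c) h; rewrite h1 h2.
Qed.

Lemma P3_ext n (e f : rel 'I_n) : (forall x y, e x y = f x y) -> P3 e = P3 f.
Proof. by move=> E; rewrite !P3E; apply: eq_card => t; rewrite !inE !E. Qed.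

Lemma P3_rev_le n (f : rel 'I_n) : P3 (rev f) <= P3 f.
Proof.
rewrite !P3E.
set s := fun t : 'I_n * 'I_n * 'I_n => ((rv t.2, rv t.1.2), rv t.1.1).
have sinj : injective s.
  apply: (can_inj (g := s)) => [[[a b] c]]; by rewrite /s /= !rvK.
rewrite -(card_imset _ sinj); apply: subset_leq_card; apply/subsetP => t' /imsetP [[[a b] c]].
rewrite !inE /= /rev => /and5P [ab bc ac eab /and3P [ebc nac nca]] -> /=.
by rewrite !rv_neq eq_sym bc eq_sym ab eq_sym ac ebc eab nca nac.
Qed.

Lemma P3_rev n (f : rel 'I_n) : P3 (rev f) = P3 f.
Proof.
apply/eqP; rewrite eqn_leq P3_rev_le /=.
have -> : P3 f = P3 (rev (rev f)) by apply: P3_ext => x y; rewrite /rev !rvK.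
exact: P3_rev_le.
Qed.

Lemma outdeg_rev n (e : rel 'I_n) v : outdeg (rev e) (rv v) <= indeg e v.
Proof.
rewrite /outdeg /indeg -(card_imset _ rv_inj); apply: subset_leq_card.
by apply/subsetP => u /imsetP [x]; rewrite !inE /rev rvK => h ->.
Qed.

Lemma addo_val n (x : 'I_n) k : x + k < n -> nat_of_ord (addo x k) = x + k.
Proof. by move=> h; rewrite /= modn_small. Qed.

Lemma witness n : 4 <= n -> exists e0 : rel 'I_n, valid e0 /\ 0 < P3 e0.
Proof.
move=> n4; exists (fun x y => dist x y == 1); split.
- split.
  + by move=> x; rewrite (_ : dist x x = 0) //; apply/eqP; rewrite eqn0Ngt dist_pos eqxx.
  + move=> x y xy; apply/negP => /andP [/eqP h1 /eqP h2].
    by have := dist_add xy; rewrite h1 h2; lia.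
  + move=> u v w c /eqP h; case/and4P: c => uv _ _; rewrite h => lt.
    by move: uv; rewrite -dist_pos; lia.
- have n0 : 0 < n by lia.
  set o0 : 'I_n := Ordinal n0.
  set o1 := addo o0 1; set o2 := addo o0 2.
  have v1 : nat_of_ord o1 = 1 by rewrite addo_val //=; lia.
  have v2 : nat_of_ord o2 = 2 by rewrite addo_val //=; lia.
  have v0 : nat_of_ord o0 = 0 by [].
  have hn := ltn_ord o0.
  have d01 : dist o0 o1 = 1 by dcase o0 o1; lia.
  have d12 : dist o1 o2 = 1 by dcase o1 o2; lia.
  have d02 : dist o0 o2 = 2 by dcase o0 o2; lia.
  have d20 : dist o2 o0 = n - 2 by dcase o2 o0; lia.
  rewrite P3E; apply/card_gt0P; exists ((o0, o1), o2); rewrite !inE /= !neqo v1 v2 v0 /=.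
  rewrite d01 d12 d02 d20 /=; apply/eqP; lia.
Qed.
Theorem mainTheorem5 (n : nat) (e : rel 'I_n) :
  4 <= n -> optimal e ->
  alpha_finite e /\
  (forall v : 'I_n,
     [/\ alpha e - 1 <= outdeg e v, outdeg e v <= beta e,
         alpha e - 1 <= indeg e v & indeg e v <= beta e]).
Proof.
move=> n4 [hv Pmax _].
have af : alpha_finite e.
  have [e0 [v0 p0]] := witness n4.
  have := leq_trans p0 (Pmax e0 v0); rewrite P3E => /card_gt0P [[[a b] c]].
  rewrite inE /= => /and5P [_ _ ac _ /and3P [_ nac nca]].
  by apply/existsP; exists (a, c); rewrite /nonedge /= ac nac nca.
have hne : exists p q, nonedge e p q.
  by case/existsP: af => [[p q]] h; exists p, q.
have valr := valid_rev hv.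
have Pmaxr : forall e' : rel 'I_n, valid e' -> P3 e' <= P3 (rev e).
  move=> e' ve'; rewrite P3_rev -(P3_rev e'); exact: Pmax _ (valid_rev ve').
have hner : exists p q, nonedge (rev e) p q.
  case: hne => p [q] /and3P [pq h1 h2]; exists (rv q), (rv p).
  by rewrite /nonedge /rev !rvK rv_neq eq_sym pq h1 h2.
case: (hv) => lo _ _.
split => // v; split.
- case: (leqP (alpha e) (outdeg e v).+1) => h; first by move: h; clear; lia.
  exfalso; apply: (key (v0 := v) n4 hv Pmax hne) => x y xy d; apply: adjA => //.
  by move: h d; clear; lia.
- apply: (card_upper (f := dist v)); first by move=> u w _ _; apply: dist_inj.
  move=> u; rewrite inE => evu; rewrite dist_pos.
  have -> /= : v != u by apply: contraTneq evu => ->; apply: lo.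
  exact: (leq_bigmax_cond (v, u)).
- case: (leqP (alpha e) (indeg e v).+1) => h; first by move: h; clear; lia.
  exfalso; apply: (key (v0 := rv v) n4 valr Pmaxr hner) => x y xy d.
  rewrite /rev; apply: adjA; first by rewrite rv_neq eq_sym.
  rewrite dist_rv; have := outdeg_rev e v; move: h d; clear; lia.
- apply: (card_upper (f := fun u => dist u v)); first by move=> u w _ _; apply: dist_injl.
  move=> u; rewrite inE => euv; rewrite dist_pos.
  have -> /= : u != v by apply: contraTneq euv => ->; apply: lo.
  exact: (leq_bigmax_cond (u, v)).
Qed.
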